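(* Let $n\ge 3$ and let $\zeta':\mathrm{TVB}_n\to\mathrm{GL}_{n+1}(\mathbb{C})$ be a complex homogeneous local representation of $\mathrm{TVB}_n$. Then $\zeta'$ is equivalent to one of the following seven representations, described by giving $2\times 2$ matrices $S,R,G$ such that $\zeta'(\sigma_i)=L_i(S)$, $\zeta'(\rho_i)=L_i(R)$ for $1\le i\le n-1$ and $\zeta'(\gamma_j)=L_j(G)$ for $1\le j\le n$: \begin{itemize} \item[(1)] $\zeta'_1$: $S=\begin{pmatrix}0&b\\ c&0\end{pmatrix}$, $R=\begin{pmatrix}0&-\frac{\sqrt b}{\sqrt c}\\ -\frac{\sqrt c}{\sqrt b}&0\end{pmatrix}$, $G=\begin{pmatrix}-1&0\\0&1\end{pmatrix}$, where $b,c\in\mathbb{C}^*$. \item[(2)] $\zeta'_2$: $S=\begin{pmatrix}0&b\\ c&0\end{pmatrix}$, $R=\begin{pmatrix}0&\frac{\sqrt b}{\sqrt c}\\ \frac{\sqrt c}{\sqrt b}&0\end{pmatrix}$, $G=\begin{pmatrix}-1&0\\0&1\end{pmatrix}$, where $b,c\in\mathbb{C}^*$. \item[(3)] $\zeta'_3$: $S=\begin{pmatrix}0&b\\ c&0\end{pmatrix}$, $R=\begin{pmatrix}0&-\frac{\sqrt b}{\sqrt c}\\ -\frac{\sqrt c}{\sqrt b}&0\end{pmatrix}$, $G=I_2$ (so $\zeta'_3(\gamma_j)=I_{n+1}$), where $b,c\in\mathbb{C}^*$. \item[(4)] $\zeta'_4$: $S=\begin{pmatrix}0&b\\ c&0\end{pmatrix}$,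 $R=\begin{pmatrix}0&\frac{\sqrt b}{\sqrt c}\\ \frac{\sqrt c}{\sqrt b}&0\end{pmatrix}$, $G=I_2$, where $b,c\in\mathbb{C}^*$. \item[(5)] $\zeta'_5$: $S=I_2$ (so $\zeta'_5(\sigma_i)=I_{n+1}$), $R=\begin{pmatrix}0&x\\ \frac1x&0\end{pmatrix}$, $G=\begin{pmatrix}-1&0\\0&1\end{pmatrix}$, where $x\in\mathbb{C}^*$. \item[(6)] $\zeta'_6$: $S=I_2$, $R=\begin{pmatrix}0&x\\ \frac1x&0\end{pmatrix}$, $G=I_2$, where $x\in\mathbb{C}^*$. \item[(7)] $\zeta'_7$: $S=R=G=I_2$, i.e. $\zeta'_7(\sigma_i)=\zeta'_7(\rho_i)=\zeta'_7(\gamma_j)=I_{n+1}$. \end{itemize} Here $\mathbb{C}^*=\mathbb{C}\setminus\{0\}$ and $\sqrt b,\sqrt c$ denote square roots of $b,c$.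
   Context: For $n\ge 2$, the twisted virtual braid group $\mathrm{TVB}_n$ is the group with generators $\sigma_1,\dots,\sigma_{n-1}$, $\rho_1,\dots,\rho_{n-1}$, $\gamma_1,\dots,\gamma_n$ and defining relations: $\sigma_i\sigma_{i+1}\sigma_i=\sigma_{i+1}\sigma_i\sigma_{i+1}$ ($1\le i\le n-2$); $\sigma_i\sigma_j=\sigma_j\sigma_i$ ($|i-j|\ge2$); $\rho_i^2=1$; $\rho_i\rho_j=\rho_j\rho_i$ ($|i-j|\ge 2$); $\rho_i\rho_{i+1}\rho_i=\rho_{i+1}\rho_i\rho_{i+1}$ ($1\le i\le n-2$); $\sigma_i\rho_j=\rho_j\sigma_i$ ($|i-j|\ge 2$); $\rho_i\rho_{i+1}\sigma_i=\sigma_{i+1}\rho_i\rho_{i+1}$ ($1\le i\le n-2$); $\gamma_i^2=1$ ($1\le i\le n$); $\gamma_i\gamma_j=\gamma_j\gamma_i$ (all $i,j$); $\gamma_j\rho_i=\rho_i\gamma_j$ and $\gamma_j\sigma_i=\sigma_i\gamma_j$ ($|i-j|\ge 2$); $\rho_i\gamma_i=\gamma_{i+1}\rho_i$ ($1\le i\le n-1$); $\rho_i\sigma_i\rho_i=\gamma_{i+1}\gamma_i\sigma_i\gamma_i\gamma_{i+1}$ ($1\le i\le n-1$). For a $2\times2$ matrix $M$ and $1\le i\le n$, let $L_i(M)$ be the $(n+1)\times(n+1)$ block-diagonal matrix $\mathrm{diag}(I_{i-1},M,I_{n-i})$. A complex homogeneous local representation $\zeta':\mathrm{TVB}_n\to\mathrm{GL}_{n+1}(\mathbb{C})$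 is a group homomorphism such that there exist $S,R,G\in\mathrm{GL}_2(\mathbb{C})$ with $\zeta'(\sigma_i)=L_i(S)$, $\zeta'(\rho_i)=L_i(R)$ for all $1\le i\le n-1$, and $\zeta'(\gamma_j)=L_j(G)$ for all $1\le j\le n$. Two representations are equivalent if they are conjugate by a fixed invertible matrix. *)

(* Defs.v *)
From HB Require Import structures.
From mathcomp Require Import all_boot all_order all_algebra.
From mathcomp Require Import reals complex.
Set Implicit Arguments. Unset Strict Implicit. Unset Printing Implicit Defensive.
Import Order.TTheory GRing.Theory Num.Theory.
Local Open Scope ring_scope.

Section TVB.
Variable F : fieldType.

Definition mx2 (a b c d : F) : 'M[F]_2 :=
  \matrix_(k < 2, l < 2)
    if val k == 0%N then (if val l == 0%N then a else b)
    else (if val l == 0%N then c else d).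

(* L_i(M) = diag(I_{i-1}, M, I_{n-i}) in 'M_(n+1), with i 1-based (1 <= i <= n);
   rows/columns are 0-based, so M occupies rows/columns i-1 and i. *)
Definition Lmat (n i : nat) (M : 'M[F]_2) : 'M[F]_(n.+1) :=
  \matrix_(j < n.+1, k < n.+1)
    if (i.-1 <= j <= i)%N && (i.-1 <= k <= i)%N
    then M (inord (j - i.-1)) (inord (k - i.-1))
    else (j == k)%:R.

Definition far (i j : nat) : bool := (i + 2 <= j)%N || (j + 2 <= i)%N.

(* The assignment sigma_i |-> L_i(S), rho_i |-> L_i(R), gamma_j |-> L_j(G)
   extends to a group homomorphism TVB_n -> GL_{n+1}(F) iff S, R, G are
   invertible and the images satisfy all defining relations of TVB_n. *)
Definition is_hom_local_rep (n : nat) (S R G : 'M[F]_2) : Prop :=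
  let s i := Lmat n i S in
  let r i := Lmat n i R in
  let g j := Lmat n j G in
  (S \in unitmx /\ R \in unitmx /\ G \in unitmx) /\
   (forall i, (1 <= i <= n - 2)%N -> s i *m s i.+1 *m s i = s i.+1 *m s i *m s i.+1) /\
   (forall i j, (1 <= i <= n - 1)%N -> (1 <= j <= n - 1)%N -> far i j ->
        s i *m s j = s j *m s i) /\
   (forall i, (1 <= i <= n - 1)%N -> r i *m r i = 1%:M) /\
   (forall i j, (1 <= i <= n - 1)%N -> (1 <= j <= n - 1)%N -> far i j ->
        r i *m r j = r j *m r i) /\
   (forall i, (1 <= i <= n - 2)%N -> r i *m r i.+1 *m r i = r i.+1 *m r i *m r i.+1) /\
   (forall i j, (1 <= i <= n - 1)%N -> (1 <= j <= n - 1)%N -> far i j ->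
        s i *m r j = r j *m s i) /\
   (forall i, (1 <= i <= n - 2)%N -> r i *m r i.+1 *m s i = s i.+1 *m r i *m r i.+1) /\
   (forall j, (1 <= j <= n)%N -> g j *m g j = 1%:M) /\
   (forall i j, (1 <= i <= n)%N -> (1 <= j <= n)%N -> g i *m g j = g j *m g i) /\
   (forall i j, (1 <= i <= n - 1)%N -> (1 <= j <= n)%N -> far i j ->
        g j *m r i = r i *m g j /\ g j *m s i = s i *m g j) /\
   (forall i, (1 <= i <= n - 1)%N -> r i *m g i = g i.+1 *m r i) /\
   (forall i, (1 <= i <= n - 1)%N ->
        r i *m s i *m r i = g i.+1 *m g i *m s i *m g i *m g i.+1).

Definition hlr_equiv (n : nat) (S R G S' R' G' : 'M[F]_2) : Prop :=
  exists P : 'M[F]_(n.+1), P \in unitmx /\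
   (forall i, (1 <= i <= n - 1)%N ->
      P *m Lmat n i S *m invmx P = Lmat n i S' /\
      P *m Lmat n i R *m invmx P = Lmat n i R') /\
   (forall j, (1 <= j <= n)%N -> P *m Lmat n j G *m invmx P = Lmat n j G').

Definition Gm : 'M[F]_2 := mx2 (-1) 0 0 1.

Definition zeta1 (S R G : 'M[F]_2) : Prop :=
  exists b c sb sc : F, [/\ b != 0, c != 0, sb ^+ 2 = b & sc ^+ 2 = c] /\ [/\
    S = mx2 0 b c 0, R = mx2 0 (- (sb / sc)) (- (sc / sb)) 0 & G = Gm].
Definition zeta2 (S R G : 'M[F]_2) : Prop :=
  exists b c sb sc : F, [/\ b != 0, c != 0, sb ^+ 2 = b & sc ^+ 2 = c] /\ [/\
    S = mx2 0 b c 0, R = mx2 0 (sb / sc) (sc / sb) 0 & G = Gm].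
Definition zeta3 (S R G : 'M[F]_2) : Prop :=
  exists b c sb sc : F, [/\ b != 0, c != 0, sb ^+ 2 = b & sc ^+ 2 = c] /\ [/\
    S = mx2 0 b c 0, R = mx2 0 (- (sb / sc)) (- (sc / sb)) 0 & G = 1%:M].
Definition zeta4 (S R G : 'M[F]_2) : Prop :=
  exists b c sb sc : F, [/\ b != 0, c != 0, sb ^+ 2 = b & sc ^+ 2 = c] /\ [/\
    S = mx2 0 b c 0, R = mx2 0 (sb / sc) (sc / sb) 0 & G = 1%:M].
Definition zeta5 (S R G : 'M[F]_2) : Prop :=
  exists x : F, [/\ x != 0, S = 1%:M, R = mx2 0 x x^-1 0 & G = Gm].
Definition zeta6 (S R G : 'M[F]_2) : Prop :=
  exists x : F, [/\ x != 0, S = 1%:M, R = mx2 0 x x^-1 0 & G = 1%:M].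
Definition zeta7 (S R G : 'M[F]_2) : Prop :=
  [/\ S = 1%:M, R = 1%:M & G = 1%:M].

End TVB.

(* Main.v *)
Require Import Defs.
From HB Require Import structures.
From mathcomp Require Import all_boot all_order all_algebra.
From mathcomp Require Import reals complex.
From mathcomp Require Import ring.
Import Order.TTheory GRing.Theory Num.Theory.
Local Open Scope ring_scope.
Ltac pg := match goal with |- ?g => idtac g end.
Lemma oltF N (a b : 'I_N) : (a < b)%N -> (a == b) = false.
Proof. by move=> h; rewrite -val_eqE /= ltn_eqF. Qed.
Lemma ogtF N (a b : 'I_N) : (b < a)%N -> (a == b) = false.
Proof. by move=> h; rewrite -val_eqE /= gtn_eqF. Qed.
Arguments oltF {N a b}. Arguments ogtF {N a b}.
Section Ext.
Variable F : fieldType.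
Variable m : nat.

Definition ext (A : 'M[F]_3) : 'M[F]_(m.+4) :=
  \matrix_(j, k) if ((j < 3) && (k < 3))%N then A (inord j) (inord k) else (j == k)%:R.

Lemma sum_first3 (G : 'I_(m.+4) -> F) :
  (forall l : 'I_(m.+4), (3 <= l)%N -> G l = 0) ->
  \sum_l G l = G (inord 0) + G (inord 1) + G (inord 2).
Proof.
move=> H.
rewrite big_ord_recl big_ord_recl big_ord_recl big1 ?addr0; last by move=> l _; apply: H.
rewrite addrA; congr (G _ + G _ + G _); apply: val_inj; rewrite /= inordK //.
Qed.

Lemma sum3 (G : 'I_3 -> F) :
  \sum_l G l = G (inord 0) + G (inord 1) + G (inord 2).
Proof.
rewrite !big_ord_recl big_ord0 addr0 addrA.
congr (G _ + G _ + G _); apply: val_inj; rewrite /= inordK //.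
Qed.

Lemma inord_eq3 (j k : nat) : (j < 3)%N -> (k < 3)%N ->
  ((inord j : 'I_3) == inord k) = (j == k).
Proof. by move=> hj hk; rewrite -val_eqE /= !inordK. Qed.

Lemma extM (A B : 'M[F]_3) : ext A *m ext B = ext (A *m B).
Proof.
apply/matrixP => j k; rewrite !mxE.
case: (ltnP j 3) => hj; case: (ltnP k 3) => hk /=.
- rewrite sum_first3; last first.
    by move=> l hl; rewrite !mxE (ltnNge l 3) hl andbF /=; rewrite (oltF (leq_trans hj hl)) mul0r.
  rewrite sum3 !mxE !inordK //= hj hk /=.
  by congr (_ * _ + _ * _ + _ * _); congr (A _ _); apply: val_inj; rewrite /= !inordK.
- rewrite big1 ?(oltF (leq_trans hj hk)) // => l _; rewrite !mxE.
  case: (ltnP l 3) => hl /=; first by rewrite (ltnNge k 3) hk /= (oltF (leq_trans hl hk)) mulr0.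
  by rewrite andbF (oltF (leq_trans hj hl)) mul0r.
- rewrite big1 ?(ogtF (leq_trans hk hj)) // => l _; rewrite !mxE.
  case: (ltnP l 3) => hl /=; first by rewrite (ltnNge j 3) hj /= (ogtF (leq_trans hl hj)) mul0r.
  by rewrite andbF (ogtF (leq_trans hk hl)) mulr0.
- rewrite (bigD1 j) //= big1 ?addr0.
    by rewrite /ext !mxE (ltnNge j 3) hj /= eqxx mul1r.
  move=> l hl; rewrite /ext !mxE (ltnNge j 3) hj /= eq_sym (negbTE hl) mul0r //.
Qed.

Lemma ext1 : ext 1%:M = 1%:M.
Proof.
apply/matrixP => j k; rewrite !mxE.
case: (ltnP j 3) => hj; case: (ltnP k 3) => hk //=.
by rewrite inord_eq3.
Qed.

Lemma ext_inj (A B : 'M[F]_3) : ext A = ext B -> A = B.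
Proof.
move=> H; apply/matrixP => j k.
have := congr1 (fun X : 'M_(m.+4) => X (inord j) (inord k)) H.
have hj : (j < m.+4)%N := leq_trans (ltn_ord j) (isT : (3 <= m.+4)%N).
have hk : (k < m.+4)%N := leq_trans (ltn_ord k) (isT : (3 <= m.+4)%N).
rewrite /ext !mxE !inordK // !ltn_ord /=.
have -> : (inord j : 'I_3) = j by apply: val_inj; rewrite /= inordK.
have -> : (inord k : 'I_3) = k by apply: val_inj; rewrite /= inordK.
done.
Qed.

Definition up3 (M : 'M[F]_2) : 'M[F]_3 :=
  \matrix_(j, k) if ((j < 2) && (k < 2))%N then M (inord j) (inord k) else (j == k)%:R.
Definition lo3 (M : 'M[F]_2) : 'M[F]_3 :=
  \matrix_(j, k) if ((0 < j) && (0 < k))%N then M (inord (j - 1)) (inord (k - 1)) else (j == k)%:R.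

Lemma L1E (M : 'M[F]_2) : Lmat (m.+3) 1 M = ext (up3 M).
Proof.
apply/matrixP => j k; rewrite /ext !mxE /= !subn0 -[(j <= 1)%N]ltnS -[(k <= 1)%N]ltnS.
case: (ltnP j 3) => hj3; case: (ltnP k 3) => hk3 /=.
- rewrite !inordK //; case: ((j < 2) && (k < 2))%N => //; by rewrite inord_eq3.
- by rewrite (ltnNge k 2) (ltnW hk3) andbF.
- by rewrite (ltnNge j 2) (ltnW hj3).
- by rewrite (ltnNge j 2) (ltnW hj3).
Qed.

Lemma L2E (M : 'M[F]_2) : Lmat (m.+3) 2 M = ext (lo3 M).
Proof.
apply/matrixP => j k; rewrite /ext !mxE /= -[(j <= 2)%N]ltnS -[(k <= 2)%N]ltnS.
case: (ltnP j 3) => hj3; case: (ltnP k 3) => hk3 /=; rewrite ?andbF //.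
rewrite !inordK // !lt0n; rewrite !andbT; case: ((val j != 0) && (val k != 0))%N => //; by rewrite inord_eq3.
Qed.


Definition m3 (x00 x01 x02 x10 x11 x12 x20 x21 x22 : F) : 'M[F]_3 :=
  \matrix_(i, j)
   if val i == 0%N then (if val j == 0%N then x00 else if val j == 1%N then x01 else x02)
   else if val i == 1%N then (if val j == 0%N then x10 else if val j == 1%N then x11 else x12)
   else (if val j == 0%N then x20 else if val j == 1%N then x21 else x22).

Lemma m3M x00 x01 x02 x10 x11 x12 x20 x21 x22 y00 y01 y02 y10 y11 y12 y20 y21 y22 :
  m3 x00 x01 x02 x10 x11 x12 x20 x21 x22 *m m3 y00 y01 y02 y10 y11 y12 y20 y21 y22 =
  m3 (x00*y00 + x01*y10 + x02*y20) (x00*y01 + x01*y11 + x02*y21) (x00*y02 + x01*y12 + x02*y22)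
     (x10*y00 + x11*y10 + x12*y20) (x10*y01 + x11*y11 + x12*y21) (x10*y02 + x11*y12 + x12*y22)
     (x20*y00 + x21*y10 + x22*y20) (x20*y01 + x21*y11 + x22*y21) (x20*y02 + x21*y12 + x22*y22).
Proof.
apply/matrixP => i j; rewrite mxE sum3 /m3 !mxE /= !inordK //.
by case: i => [[|[|[|//]]] ?]; case: j => [[|[|[|//]]] ?].
Qed.

Lemma m3_inj x00 x01 x02 x10 x11 x12 x20 x21 x22 y00 y01 y02 y10 y11 y12 y20 y21 y22 :
  m3 x00 x01 x02 x10 x11 x12 x20 x21 x22 = m3 y00 y01 y02 y10 y11 y12 y20 y21 y22 ->
  x00 = y00 /\ x01 = y01 /\ x02 = y02 /\ x10 = y10 /\ x11 = y11 /\ x12 = y12 /\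
      x20 = y20 /\ x21 = y21 /\ x22 = y22.
Proof.
move=> E.
have P (i j : nat) : (i < 3)%N -> (j < 3)%N ->
   m3 x00 x01 x02 x10 x11 x12 x20 x21 x22 (inord i) (inord j) =
   m3 y00 y01 y02 y10 y11 y12 y20 y21 y22 (inord i) (inord j) by rewrite E.
have := P 0%N 0%N isT isT; have := P 0%N 1%N isT isT; have := P 0%N 2%N isT isT;
have := P 1%N 0%N isT isT; have := P 1%N 1%N isT isT; have := P 1%N 2%N isT isT;
have := P 2%N 0%N isT isT; have := P 2%N 1%N isT isT; have := P 2%N 2%N isT isT.
rewrite /m3 !mxE /= !inordK //=.
Qed.

Lemma m3_1 : 1%:M = m3 1 0 0 0 1 0 0 0 1.
Proof.
apply/matrixP => i j; rewrite /m3 !mxE.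
by case: i => [[|[|[|//]]] ?]; case: j => [[|[|[|//]]] ?].
Qed.


Lemma up3E a b c d : up3 (Defs.mx2 a b c d) = m3 a b 0 c d 0 0 0 1.
Proof.
apply/matrixP => i j; rewrite /up3 /m3 /Defs.mx2 !mxE.
case: i => [[|[|[|//]]] ?]; case: j => [[|[|[|//]]] ?]; by rewrite /= ?mxE /= ?inordK.
Qed.

Lemma lo3E a b c d : lo3 (Defs.mx2 a b c d) = m3 1 0 0 0 a b 0 c d.
Proof.
apply/matrixP => i j; rewrite /lo3 /m3 /Defs.mx2 !mxE.
case: i => [[|[|[|//]]] ?]; case: j => [[|[|[|//]]] ?]; by rewrite /= ?mxE /= ?inordK.
Qed.

End Ext.


Ltac simp := rewrite ?(mul0r, mulr0, add0r, addr0, mul1r, mulr1).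

Section Main.
Variable F : fieldType.

Lemma row_nonunit (M : 'M[F]_2) i : (forall j, M i j = 0) -> M \notin unitmx.
Proof.
move=> H; apply/negP => /mulmxV E; have := congr1 (fun X : 'M_2 => X i i) E.
rewrite !mxE eqxx big1 => [/eqP|j _]; last by rewrite H mul0r.
by rewrite eq_sym oner_eq0.
Qed.

Lemma mx2_1 : mx2 (1 : F) 0 0 1 = 1%:M.
Proof.
apply/matrixP => i j; rewrite /mx2 !mxE.
by case: i => [[|[|//]] ?]; case: j => [[|[|//]] ?].
Qed.

Lemma mx2_ex (M : 'M[F]_2) : exists a b c d, M = mx2 a b c d.
Proof.
exists (M 0 0), (M 0 1), (M 1 0), (M 1 1).
apply/matrixP => i j; rewrite /mx2 !mxE.
by case: i => [[|[|//]] ?]; case: j => [[|[|//]] ?]; congr (M _ _); apply: val_inj.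
Qed.

Lemma alg (a b c d e f g h p q r s : F) :
  (forall y : F, exists z, z ^+ 2 = y) ->
  mx2 a b c d \in unitmx ->
 (a * a + b * a * c = a /\
 a * b + b * a * d = b * a /\
 b * b = b * b /\
 c * a + d * a * c = a * c /\
 c * b + d * a * d = a * d * a + b * c /\
 d * b = a * d * b + b * d /\
 c * c = c * c /\ c * d = c * d * a + d * c /\ d = c * d * b + d * d) ->
 (e * e + f * g = 1 /\
 e * f + f * h = 0 /\
 (0:F) = 0 /\
 g * e + h * g = 0 /\ g * f + h * h = 1 /\ (0:F) = 0 /\ (0:F) = 0 /\ (0:F) = 0 /\ (1:F) = 1) ->
 (e * e + f * e * g = e /\
 e * f + f * e * h = f * e /\
 f * f = f * f /\
 g * e + h * e * g = e * g /\
 g * f + h * e * h = e * h * e + f * g /\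
 h * f = e * h * f + f * h /\
 g * g = g * g /\ g * h = g * h * e + h * g /\ h = g * h * f + h * h) ->
 (e * a + f * e * c = e /\
 e * b + f * e * d = f * e /\
 f * f = f * f /\
 g * a + h * e * c = a * g /\
 g * b + h * e * d = a * h * e + b * g /\
 h * f = a * h * f + b * h /\
 g * c = c * g /\ g * d = c * h * e + d * g /\ h = c * h * f + d * h) ->
 (p * p + q * r = 1 /\
 p * q + q * s = 0 /\
 (0:F) = 0 /\
 r * p + s * r = 0 /\ r * q + s * s = 1 /\ (0:F) = 0 /\ (0:F) = 0 /\ (0:F) = 0 /\ (1:F) = 1) ->
 (p = p /\
 q * p = q /\
 q * q = 0 /\
 r = p * r /\ s * p = p * s /\ s * q = q /\ 0 = r * r /\ r = r * s /\ s = s) ->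
 (e * p + f * r = e /\
 e * q + f * s = f /\
 (0:F) = 0 /\
 g * p + h * r = p * g /\
 g * q + h * s = p * h /\ 0 = q /\ 0 = r * g /\ 0 = r * h /\ 1 = s) ->
 ((e * a + f * c) * e + (e * b + f * d) * g =
 (p * a + q * c) * p + (p * b + q * d) * r /\
 (e * a + f * c) * f + (e * b + f * d) * h =
 ((p * a + q * c) * q + (p * b + q * d) * s) * p /\
 0 = ((p * a + q * c) * q + (p * b + q * d) * s) * q /\
 (g * a + h * c) * e + (g * b + h * d) * g =
 (p * r * a + p * s * c) * p + (p * r * b + p * s * d) * r /\
 (g * a + h * c) * f + (g * b + h * d) * h =
 ((p * r * a + p * s * c) * q + (p * r * b + p * s * d) * s) * p + q * r /\
 0 = ((p * r * a + p * s * c) * q + (p * r * b + p * s * d) * s) * q + q * s /\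
 0 = (r * r * a + r * s * c) * p + (r * r * b + r * s * d) * r /\
 0 = ((r * r * a + r * s * c) * q + (r * r * b + r * s * d) * s) * p + s * r /\
 1 = ((r * r * a + r * s * c) * q + (r * r * b + r * s * d) * s) * q + s * s) ->
 let S := mx2 a b c d in let T := mx2 e f g h in let G := mx2 p q r s in
    (zeta1 S T G \/ zeta2 S T G \/ zeta3 S T G \/ zeta4 S T G \/
     zeta5 S T G \/ zeta6 S T G \/ zeta7 S T G).
Proof.
move=> sqrt uS
  [B00 [B01 [_ [B10 [B11 [B12 [_ [B21 B22]]]]]]]]
  [Q00 [Q01 [_ [Q10 [Q11 _]]]]]
  [T00 [T01 [_ [T10 [T11 [T12 [_ [T21 T22]]]]]]]]
  [M00 [M01 [_ [M10 [M11 [M12 [M20 [M21 M22]]]]]]]]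
  [P00 [P01 [_ [P10 [P11 _]]]]]
  [_ [_ [C02 [_ [_ [_ [C20 _]]]]]]]
  [RG00 [RG01 [_ [RG10 [RG11 [RG12 [RG20 [RG21 RG22]]]]]]]]
  [S00 [S01 _]].
have q0 : q = 0 by apply/eqP; rewrite -sqrf_eq0 expr2 C02.
have r0 : r = 0 by apply/eqP; rewrite -sqrf_eq0 expr2 -C20.
subst q r; rewrite -RG22 in S00 S01 *.
move: P00; simp => P00.
have pE : p = 1 \/ p = -1.
  have /orP[/eqP ->|/eqP ->] : (p == 1) || (p == -1) by rewrite -sqrf_eq1 expr2 P00.
    by left.
  by right.
have [e0|e0] := eqVneq e 0.
-
  subst e; move: Q00 Q11 S00 S01 B01 B10 B00; simp => Q00 Q11 S00 S01 B01 B10 B00.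
  have hh : h * h = 0 by apply: (addrI (g * f)); rewrite addr0 Q11 mulrC Q00.
  have h0 : h = 0 by apply/eqP; rewrite -sqrf_eq0 expr2 hh.
  subst h; move: S00 S01; simp => S00 S01.
  have f0 : f != 0 by apply/eqP => f0; move: Q00; rewrite f0 mul0r => /eqP; rewrite eq_sym oner_eq0.
  have gE : g = f^-1 by apply: (mulfI f0); rewrite Q00 mulfV.
  have dE : d = a.
    transitivity (f * d * g); first by rewrite mulrAC Q00 mul1r.
    by rewrite S00 mulrAC P00 mul1r.
  have bE : b = f * c * f by rewrite S01 mulrAC P00 mul1r.
  subst d.
  have {}B01 : b * a * a = 0 by apply: (addrI (a * b)); rewrite addr0 B01 mulrC.
  have {}B10 : a * a * c = 0 by apply: (addrI (c * a)); rewrite addr0 B10 mulrC.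
  have [a0|a0] := eqVneq a 0.
  + subst a; move: uS B01; simp => uS _.
    have b0 : b != 0.
      apply/eqP=> b0; suff: ~~ (mx2 0 b c 0 \in unitmx) by rewrite uS.
      apply: (row_nonunit _ 0) => j.
      by rewrite b0 /mx2 mxE /=; case: ifP.
    have c0 : c != 0.
      apply/eqP=> c0; suff: ~~ (mx2 0 b c 0 \in unitmx) by rewrite uS.
      apply: (row_nonunit _ 1) => j.
      by rewrite c0 /mx2 mxE /=; case: ifP.
    have [sc sc2] := sqrt c.
    have sc0 : sc != 0 by apply/eqP => sc0; move: c0; rewrite -sc2 sc0 expr2 mul0r eqxx.
    have E1 : f = (f * sc) / sc by field.
    have E2 : g = sc / (f * sc) by rewrite gE; field; rewrite f0 sc0.
    have E3 : (f * sc) ^+ 2 = b by rewrite bE -sc2; ring.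
    case: pE => ->.
    * right; right; right; left; exists b, c, (f * sc), sc; split; first by split.
      by split; rewrite -?mx2_1 //; congr (mx2 _ _ _ _).
    * right; left; exists b, c, (f * sc), sc; split; first by split.
      by split; rewrite //; congr (mx2 _ _ _ _).
  + have b0 : b = 0.
      by move/eqP: B01; rewrite -mulrA mulf_eq0 (negbTE (mulf_neq0 a0 a0)) orbF => /eqP.
    have c0 : c = 0.
      by move/eqP: B10; rewrite mulf_eq0 (negbTE (mulf_neq0 a0 a0)) /= => /eqP.
    subst b c; move: B00; simp => B00.
    have a1 : a = 1 by apply: (mulfI a0); rewrite mulr1.
    subst a; rewrite mx2_1 gE.
    case: pE => ->.
    * right; right; right; right; right; left; exists f; split => //; by rewrite mx2_1.
    * right; right; right; right; left; exists f; split => //.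
-
  have h1 : e + f * g = 1.
    apply: (mulfI e0); rewrite mulr1 -[RHS]T00; ring.
  have e1 : e = 1.
    apply: (mulfI e0); rewrite mulr1; apply: (addIr (f * g)); rewrite Q00 -h1 //.
  subst e; move: h1 T01 Q01 T10 Q10 Q11 T22 RG00 M00 M01 M10 M11; simp.
  move=> h1 T01 Q01 T10 Q10 Q11 T22 RG00 M00 M01 M10 M11.
  have fh : f * h = 0 by apply: (addrI f); rewrite addr0.
  have f0 : f = 0 by rewrite -Q01 fh addr0.
  subst f; move: T10 Q10 Q11 T22; simp => T10 Q10 Q11 T22.
  have hg : h * g = 0 by apply: (addrI g); rewrite addr0.
  have g0 : g = 0 by rewrite -Q10 hg addr0.
  subst g; move: Q11 T22; simp => Q11 T22.
  have h1' : h = 1 by rewrite T22.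
  subst h p; move: M00 M01 M10 M11; simp => M00 M01 M10 M11.
  subst a b c; move: M11; simp => M11; subst d.
  right; right; right; right; right; right; by rewrite /zeta7 mx2_1.
Qed.

Lemma main_rep (m : nat) (S T G : 'M[F]_2) :
  (forall y : F, exists z, z ^+ 2 = y) ->
  is_hom_local_rep (m.+3) S T G ->
    (zeta1 S T G \/ zeta2 S T G \/ zeta3 S T G \/ zeta4 S T G \/
     zeta5 S T G \/ zeta6 S T G \/ zeta7 S T G).
Proof.
move=> sqrt.
have [a [b [c [d ->]]]] := mx2_ex S.
have [e [f [g [h ->]]]] := mx2_ex T.
have [p [q [r [s ->]]]] := mx2_ex G.
move=> [[uS [uT uG]] [bS [_ [sqT [_ [bT [_ [mix [g2 [gc [_ [rg rsr]]]]]]]]]]]].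
move: (bS 1 isT) (sqT 1 isT) (bT 1 isT) (mix 1 isT) (g2 1 isT) (gc 1 2 isT isT) (rg 1 isT) (rsr 1 isT).
rewrite !L1E !L2E -(ext1 _ m) !extM !up3E !lo3E m3_1 !m3M.
move=> /ext_inj/m3_inj BS /ext_inj/m3_inj SQT /ext_inj/m3_inj BT /ext_inj/m3_inj MIX
  /ext_inj/m3_inj G2 /ext_inj/m3_inj GC /ext_inj/m3_inj RG /ext_inj/m3_inj RSR.
clear bS sqT bT mix g2 gc rg rsr.
move: BS SQT BT MIX G2 GC RG RSR; simp.
exact: alg.
Qed.
End Main.

Theorem theorem3p4 (R : realType) (n : nat) (S T G : 'M[R[i]]_2) :
  (3 <= n)%N -> is_hom_local_rep n S T G ->
  exists S' T' G' : 'M[R[i]]_2,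
    (zeta1 S' T' G' \/ zeta2 S' T' G' \/ zeta3 S' T' G' \/ zeta4 S' T' G' \/
     zeta5 S' T' G' \/ zeta6 S' T' G' \/ zeta7 S' T' G') /\
    hlr_equiv n S T G S' T' G'.
Proof.
move=> hn H; exists S, T, G; split.
  have [m nE] : exists m, n = m.+3 by exists (n - 3)%N; rewrite -addn3 subnK.
  subst n; apply: main_rep H => y; exists (sqrtC y); exact: sqrtCK.
exists 1%:M; split; first exact: unitmx1.
by split => [i _|j _]; rewrite invmx1 !mul1mx !mulmx1.
Qed.
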